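(* Let $G_i=(V_i,E_i)$ be a graph of minimum degree $\delta_i$, $i\in\{1,2\}$, let $S\subseteq V_1\times V_2$ and let $k$ be an integer. If for some $i\in\{1,2\}$ the projection $P_{V_i}(S)$ is a $k$-oaf set in $G_i$, then $S$ is a $(k-\delta_j)$-oaf set in $G_1\times G_2$, where $j\in\{1,2\}$, $j\neq i$.
   Context: All graphs are finite and simple. For a graph $G=(V,E)$, a set $S\subseteq V$ and $v\in V$, let $\delta_S(v)=|\{u\in S: uv\in E\}|$, $\overline{S}=V\setminus S$, and let $\partial S$ be the set of vertices of $\overline S$ adjacent to at least one vertex of $S$. For an integer $k$, a non-empty set $S\subseteq V$ is an offensive $k$-alliance if $\delta_S(v)\ge \delta_{\overline S}(v)+k$ for every $v\in \partial S$. A set $X\subseteq V$ is an offensive $k$-alliance free set ($k$-oaf set) if no offensive $k$-alliance $S$ satisfies $S\subseteq X$. The Cartesian product $G_1\times G_2$ of $G_1=(V_1,E_1)$, $G_2=(V_2,E_2)$ has vertex set $V_1\times V_2$, with $(a,b)$ adjacent to $(c,d)$ iff either $a=c$ and $bd\in E_2$, or $b=d$ and $ac\in E_1$. For $A\subseteq V_1\times V_2$, $P_{V_i}(A)$ denotes the projection of $A$ onto $V_i$. *)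

(* Defs.v *)
From HB Require Import structures.
From mathcomp Require Import all_boot all_order all_algebra.
Set Implicit Arguments. Unset Strict Implicit. Unset Printing Implicit Defensive.
Import Order.TTheory GRing.Theory Num.Theory.

Definition simple_graph (T : finType) (e : rel T) : Prop :=
  symmetric e /\ irreflexive e.

Definition deg_in (T : finType) (e : rel T) (S : {set T}) (v : T) : nat :=
  #|[set u in S | e u v]|.

Definition deg (T : finType) (e : rel T) (v : T) : nat := deg_in e setT v.

(* minimum degree; (for an empty vertex set this is #|T| = 0) *)
Definition mindeg (T : finType) (e : rel T) : nat :=
  \big[minn/#|T|]_(v : T) deg e v.

Definition boundary (T : finType) (e : rel T) (S : {set T}) : {set T} :=
  [set v in ~: S | [exists u in S, e u v]].

Definition off_alliance (T : finType) (e : rel T) (k : int) (S : {set T}) : Prop :=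
  S != set0 /\
  forall v, v \in boundary e S ->
    ((deg_in e (~: S) v)%:Z + k <= (deg_in e S v)%:Z)%R.

Definition oaf (T : finType) (e : rel T) (k : int) (X : {set T}) : Prop :=
  forall S : {set T}, S \subset X -> ~ off_alliance e k S.

Definition cart_prod (T1 T2 : finType) (e1 : rel T1) (e2 : rel T2)
  : rel (T1 * T2) :=
  fun x y => ((x.1 == y.1) && e2 x.2 y.2) || ((x.2 == y.2) && e1 x.1 y.1).

Definition proj1 (T1 T2 : finType) (A : {set T1 * T2}) : {set T1} :=
  [set x.1 | x in A].
Definition proj2 (T1 T2 : finType) (A : {set T1 * T2}) : {set T2} :=
  [set x.2 | x in A].

(* Main.v *)
Require Import Defs.
From HB Require Import structures.
From mathcomp Require Import all_boot all_order all_algebra zify.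
Import Order.TTheory GRing.Theory Num.Theory.

Lemma mindeg_le (T : finType) (e : rel T) v : mindeg e <= deg e v.
Proof.
rewrite /mindeg; have : v \in index_enum T by rewrite mem_index_enum.
elim: (index_enum T) => [//|a r IH]; rewrite inE big_cons => /orP [/eqP <-|H].
  exact: geq_minl.
by rewrite geq_min IH ?orbT.
Qed.

Lemma part1 (T1 T2 : finType) (e1 : rel T1) (e2 : rel T2)
  (G1 : simple_graph e1) (G2 : simple_graph e2)
  (S : {set T1 * T2}) (k : int) :
  oaf e1 k (proj1 S) ->
     oaf (cart_prod e1 e2) (k - (mindeg e2)%:Z)%R S.
Proof.
move=> Hoaf S' sS' [S'n Hall].
have sA : proj1 S' \subset proj1 S by apply: imsetS.
apply: (Hoaf _ sA); split.
  case/set0Pn: S'n => x xS; apply/set0Pn; exists x.1; exact: imset_f.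
move=> a Ha; apply/negPn/negP => Hn.
move: Ha; rewrite inE => /andP [aA /existsP [a' /andP [a'A ea]]].
case/imsetP: a'A => x xS' ->{a'} in ea.
rewrite inE in aA.
have vS : (a, x.2) \notin S'.
  by apply/negP => H; move/negP: aA; apply; exact: (imset_f (fun y => y.1) H).
have vB : (a, x.2) \in boundary (cart_prod e1 e2) S'.
  rewrite inE inE vS /=; apply/existsP; exists x; rewrite xS' /=.
  by rewrite /cart_prod /= eqxx ea orbT.
have H := Hall _ vB.
set A := proj1 S' in aA Hn.
have up : deg_in (cart_prod e1 e2) S' (a, x.2) <= deg_in e1 A a.
  rewrite /deg_in.
  have -> : #|[set u in S' | cart_prod e1 e2 u (a, x.2)]| =
            #|[set u.1 | u in [set u in S' | cart_prod e1 e2 u (a, x.2)]]|.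
    apply/esym/card_in_imset => u w; rewrite !inE /cart_prod /=.
    move=> /andP [uS /orP [/andP [/eqP u1 _]|/andP [/eqP u2 _]]].
      by move: aA; rewrite -u1 (imset_f (fun y => y.1) uS).
    move=> /andP [wS /orP [/andP [/eqP w1 _]|/andP [/eqP w2 _]]].
      by move: aA; rewrite -w1 (imset_f (fun y => y.1) wS).
    by move=> E; rewrite [u]surjective_pairing [w]surjective_pairing E u2 w2.
  apply: subset_leq_card; apply/subsetP => y /imsetP [u]; rewrite !inE /cart_prod /=.
  move=> /andP [uS /orP [/andP [/eqP u1 _]|/andP [_ eu]]] ->.
    by move: aA; rewrite -u1 (imset_f (fun y => y.1) uS).
  by rewrite (imset_f (fun y => y.1) uS).
have lo : deg e2 x.2 + deg_in e1 (~: A) a <=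
          deg_in (cart_prod e1 e2) (~: S') (a, x.2).
  rewrite /deg /deg_in.
  set X := [set u in ~: S' | _].
  set B1 := [set u in setT | e2 u x.2].
  set B2 := [set u in ~: A | e1 u a].
  have c1 : #|B1| = #|[set (a, y) | y in B1]|.
    by apply/esym/card_imset => y z [].
  have c2 : #|B2| = #|[set (y, x.2) | y in B2]|.
    by apply/esym/card_imset => y z [].
  rewrite c1 c2.
  have I0 : #|[set (a, y) | y in B1] :&: [set (y, x.2) | y in B2]| = 0.
    apply/eqP; rewrite cards_eq0; apply/eqP/setP => z; rewrite !inE.
    apply/negP => /andP [/imsetP [y _ ->] /imsetP [w]].
    rewrite !inE => /andP [_ ew] [wa _]; subst w.
    by case: G1 => _ /(_ a); rewrite ew.
  rewrite -cardsUI I0 addn0; apply: subset_leq_card; apply/subsetP => z.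
  rewrite inE => /orP [] /imsetP [y]; rewrite !inE => Hy ->; rewrite /cart_prod /=.
    rewrite eqxx Hy andbT.
    by apply/negP => H'; move/negP: aA; apply; exact: (imset_f (fun y => y.1) H').
  move/andP: Hy => [yA ey]; rewrite eqxx ey orbT andbT.
  by apply/negP => H'; move/negP: yA; apply; exact: (imset_f (fun y => y.1) H').
have md := mindeg_le _ e2 x.2.
move/negP: Hn; apply.
move: H up lo md.
set d1 := deg_in _ S' _. set d2 := deg_in _ (~: S') _.
set d3 := deg_in e1 A a. set d4 := deg_in e1 (~: A) a.
set d5 := deg e2 x.2. set d6 := mindeg e2.
move=> H up lo md.
have : (d4%:Z + k <= d3%:Z)%R.
  lia.
by [].
Qed.

Lemma part2 (T1 T2 : finType) (e1 : rel T1) (e2 : rel T2)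
  (G1 : simple_graph e1) (G2 : simple_graph e2)
  (S : {set T1 * T2}) (k : int) :
  oaf e2 k (proj2 S) ->
     oaf (cart_prod e1 e2) (k - (mindeg e1)%:Z)%R S.
Proof.
move=> Hoaf S' sS' [S'n Hall].
have sA : proj2 S' \subset proj2 S by apply: imsetS.
apply: (Hoaf _ sA); split.
  case/set0Pn: S'n => x xS; apply/set0Pn; exists x.2; exact: imset_f.
move=> a Ha; apply/negPn/negP => Hn.
move: Ha; rewrite inE => /andP [aA /existsP [a' /andP [a'A ea]]].
case/imsetP: a'A => x xS' ->{a'} in ea.
rewrite inE in aA.
have vS : (x.1, a) \notin S'.
  by apply/negP => H; move/negP: aA; apply; exact: (imset_f (fun y => y.2) H).
have vB : (x.1, a) \in boundary (cart_prod e1 e2) S'.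
  rewrite inE inE vS /=; apply/existsP; exists x; rewrite xS' /=.
  by rewrite /cart_prod /= eqxx ea.
have H := Hall _ vB.
set A := proj2 S' in aA Hn.
have up : deg_in (cart_prod e1 e2) S' (x.1, a) <= deg_in e2 A a.
  rewrite /deg_in.
  have -> : #|[set u in S' | cart_prod e1 e2 u (x.1, a)]| =
            #|[set u.2 | u in [set u in S' | cart_prod e1 e2 u (x.1, a)]]|.
    apply/esym/card_in_imset => u w; rewrite !inE /cart_prod /=.
    move=> /andP [uS /orP [/andP [/eqP u1 _]|/andP [/eqP u2 _]]]; last first.
      by move: aA; rewrite -u2 (imset_f (fun y => y.2) uS).
    move=> /andP [wS /orP [/andP [/eqP w1 _]|/andP [/eqP w2 _]]]; last first.
      by move: aA; rewrite -w2 (imset_f (fun y => y.2) wS).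
    by move=> E; rewrite [u]surjective_pairing [w]surjective_pairing E u1 w1.
  apply: subset_leq_card; apply/subsetP => y /imsetP [u]; rewrite !inE /cart_prod /=.
  move=> /andP [uS /orP [/andP [_ eu]|/andP [/eqP u2 _]]] ->.
    by rewrite (imset_f (fun y => y.2) uS).
  by move: aA; rewrite -u2 (imset_f (fun y => y.2) uS).
have lo : deg e1 x.1 + deg_in e2 (~: A) a <=
          deg_in (cart_prod e1 e2) (~: S') (x.1, a).
  rewrite /deg /deg_in.
  set X := [set u in ~: S' | _].
  set B1 := [set u in setT | e1 u x.1].
  set B2 := [set u in ~: A | e2 u a].
  have c1 : #|B1| = #|[set (y, a) | y in B1]|.
    by apply/esym/card_imset => y z [].
  have c2 : #|B2| = #|[set (x.1, y) | y in B2]|.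
    by apply/esym/card_imset => y z [].
  rewrite c1 c2.
  have I0 : #|[set (y, a) | y in B1] :&: [set (x.1, y) | y in B2]| = 0.
    apply/eqP; rewrite cards_eq0; apply/eqP/setP => z; rewrite !inE.
    apply/negP => /andP [/imsetP [y _ ->] /imsetP [w]].
    rewrite !inE => /andP [_ ew] [_ wa]; subst w.
    by case: G2 => _ /(_ a); rewrite ew.
  rewrite -cardsUI I0 addn0; apply: subset_leq_card; apply/subsetP => z.
  rewrite inE => /orP [] /imsetP [y]; rewrite !inE => Hy ->; rewrite /cart_prod /=.
    rewrite eqxx Hy orbT andbT.
    by apply/negP => H'; move/negP: aA; apply; exact: (imset_f (fun y => y.2) H').
  move/andP: Hy => [yA ey]; rewrite eqxx ey andbT.
  by rewrite orTb andbT; apply/negP => H'; move/negP: yA; apply; exact: (imset_f (fun y => y.2) H').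
have md := mindeg_le _ e1 x.1.
move/negP: Hn; apply.
move: H up lo md.
set d1 := deg_in _ S' _. set d2 := deg_in _ (~: S') _.
set d3 := deg_in e2 A a. set d4 := deg_in e2 (~: A) a.
set d5 := deg e1 x.1. set d6 := mindeg e1.
move=> H up lo md.
have : (d4%:Z + k <= d3%:Z)%R.
  lia.
by [].
Qed.

Theorem theorem3 (T1 T2 : finType) (e1 : rel T1) (e2 : rel T2)
  (G1 : simple_graph e1) (G2 : simple_graph e2)
  (S : {set T1 * T2}) (k : int) :
  (oaf e1 k (proj1 S) ->
     oaf (cart_prod e1 e2) (k - (mindeg e2)%:Z)%R S) /\
  (oaf e2 k (proj2 S) ->
     oaf (cart_prod e1 e2) (k - (mindeg e1)%:Z)%R S).
Proof.
split; [exact: part1 | exact: part2].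
Qed.
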